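(* Let $n\in\mathbb N$. Then $\delta(m)<\delta(n)$ for every $m\in\mathbb N$ with $m<n$ if and only if $n=1$ or $n$ is a prime number.
   Context: $\mathbb N$ is the set of positive integers. For $n\in\mathbb N$, $\delta(n)=\min\{\,r+s : r,s\in\mathbb N,\ r\le s,\ rs=n\,\}$, i.e. the minimum of $d+n/d$ over positive divisors $d$ of $n$. *)

(* Defs.v *)
From mathcomp Require Import all_boot.
Set Implicit Arguments. Unset Strict Implicit. Unset Printing Implicit Defensive.

(* The seed n.+1 of the min-fold is the value at d = 1, so it does not
   affect the minimum for n >= 1. (For n = 0, divisors 0 = [::], value 1;
   n = 0 is never used since the statement quantifies over positive n.) *)
Definition delta (n : nat) : nat :=
  \big[minn/n.+1]_(d <- divisors n) (d + n %/ d).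

(* Main.v *)
Require Import Defs.
From mathcomp Require Import all_boot zify.
Set Implicit Arguments. Unset Strict Implicit. Unset Printing Implicit Defensive.


Lemma sqrt_ex N : exists r, r * r <= N < r.+1 * r.+1.
Proof.
elim: N => [|N [r /andP [H1 H2]]]; first by exists 0.
case: (ltnP N.+1 (r.+1 * r.+1)) => H3.
  by exists r; rewrite H3 andbT; lia.
exists r.+1; rewrite H3 /=. nia.
Qed.

Lemma prod_sub a b F : a <= b -> (forall p, 0 < F p) ->
  \prod_(a <= p < b) F p <= \prod_(0 <= p < b) F p.
Proof.
move=> ab FP; rewrite (@big_cat_nat _ _ _ a 0 b) //=.
by apply: leq_pmull; apply: prodn_gt0.
Qed.

Lemma prod_ext X Y F : (forall p, X <= p -> F p = 1) ->
  \prod_(0 <= p < X) F p = \prod_(0 <= p < X + Y) F p.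
Proof.
move=> H; rewrite [RHS](@big_cat_nat _ _ _ X) ?leq_addr //=.
rewrite (@eq_big_nat _ _ _ X (X+Y) F (fun _ => 1)); last by move=> i /andP[hi _]; apply: H.
by rewrite prod_nat_const_nat exp1n muln1.
Qed.

Lemma nd_fact p n : prime p -> n < p -> ~~ (p %| n`!).
Proof.
move=> pp; elim: n => [|n IH] hn; first by rewrite fact0 Euclid_dvd1.
rewrite factS Euclid_dvdM // negb_or IH ?andbT; last lia.
apply/negP => /dvdn_leq; lia.
Qed.

Lemma logn_np p n : ~~ prime p -> logn p n = 0.
Proof. by move=> np; rewrite lognE (negbTE np). Qed.

Lemma prod_logn n B : 0 < n -> (forall p, prime p -> p %| n -> p < B) ->
  n = \prod_(0 <= p < B) p ^ logn p n.
Proof.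
move=> n0 HB.
have E : n = \prod_(0 <= p < n.+1) p ^ logn p n.
  rewrite -{1}(partnT n0) /partn; apply: eq_bigl => p //.
have Z : forall p, 0 < logn p n -> prime p /\ p %| n.
  move=> p; rewrite logn_gt0 mem_primes => /and3P[-> _ ->]; done.
rewrite {1}E (@prod_ext n.+1 B) ?(@prod_ext B n.+1 _) 1?addnC //.
  move=> p hp; case: (posnP (logn p n)) => [-> //|/Z [pp /HB]]; lia.
move=> p hp; case: (posnP (logn p n)) => [-> //|/Z [pp /dvdn_leq]]; lia.
Qed.


Lemma bin_step k : k.+1 * 'C((2*k.+1), k.+1) = 2 * (2*k).+1 * 'C(2*k, k).
Proof.
have E1 : 2 * k.+1 = (2*k).+2 by lia.
have h1 := mul_bin_diag (2*k).+2 k.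
have h2 := mul_bin_diag (2*k).+1 k.
have h3 := @bin_sub (2*k).+1 k.
have E2 : (2*k).+1 - k = k.+1 by lia.
rewrite E2 /= in h3; rewrite /= in h1 h2.
rewrite E1; rewrite h3 in h2.
set A := 'C((2*k).+1, k) in h1 h2 h3 *; set Z := 'C((2*k).+2, k.+1) in h1 *.
all: lia.
Qed.

Lemma central_lb k : 4^k <= (2*k).+1 * 'C(2*k, k).
Proof.
elim: k => [|k IH]; first by rewrite bin0.
have h := bin_step k.
rewrite -(@leq_pmul2l k.+1) // expnS.
have E : (2 * k.+1).+1 = (2*k).+3 by lia.
rewrite E [X in _ <= X]mulnCA h.
set P := 4^k in IH *; set Y := 'C(2*k,k) in IH h *.
nia.
Qed.

Lemma bin_odd_ub m : 'C((2*m).+1, m) <= 4^m.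
Proof.
have S : 2 ^ (2*m).+1 = \sum_(0 <= i < (2*m).+2) 'C((2*m).+1, i).
  rewrite -{1}[2]/(1+1) expnDn big_mkord; apply: eq_bigr => i _.
  by rewrite !exp1n !muln1.
rewrite (@big_cat_nat _ _ _ m) in S; [|lia|lia].
rewrite (@big_ltn _ _ _ m) in S; last lia.
rewrite (@big_ltn _ _ _ m.+1) in S; last lia.
have h3 := @bin_sub (2*m).+1 m.
have E2 : (2*m).+1 - m = m.+1 by lia.
rewrite E2 in h3; rewrite h3 in S; last lia.
have -> : 4 ^ m = 2 ^ (2 * m) by rewrite expnM.
rewrite expnS in S.
set A := 2 ^ (2*m) in S *.
set B := 'C(_, m) in S *.
set C := \sum_(0 <= i < m) _ in S.
set D := \sum_(_ <= i < _) _ in S.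
have S2 : 2 * A = C + (B + (B + D)) := S.
lia.
Qed.

Lemma leq_prod_nat a b F G : (forall i, a <= i < b -> F i <= G i) ->
  \prod_(a <= i < b) F i <= \prod_(a <= i < b) G i.
Proof. by move=> H; rewrite big_nat [X in _ <= X]big_nat; apply: leq_prod. Qed.

Lemma leq_sum_nat' a b F G : (forall i, a <= i < b -> F i <= G i) ->
  \sum_(a <= i < b) F i <= \sum_(a <= i < b) G i.
Proof. by move=> H; rewrite big_nat [X in _ <= X]big_nat; apply: leq_sum. Qed.

Definition prim x := \prod_(0 <= p < x.+1 | prime p) p.

Lemma primS y : prim y.+1 = prim y * (if prime y.+1 then y.+1 else 1).
Proof. by rewrite /prim big_mkcond [X in _ = X * _]big_mkcond big_nat_recr. Qed.

Lemma bin_fact_dvd p n m : m <= n -> p %| 'C(n, m) -> p %| n`!.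
Proof. by move=> hm hp; rewrite -(bin_fact hm); apply: dvdn_mulr. Qed.




Lemma bin_odd_logn m j : prime j -> m.+2 <= j <= (2*m).+1 ->
  0 < logn j 'C((2*m).+1, m).
Proof.
move=> pj /andP[h1 h2].
have hb := @bin_fact (2*m).+1 m.
have E2 : (2*m).+1 - m = m.+1 by lia.
rewrite E2 in hb.
have hC : 0 < 'C((2*m).+1, m) by rewrite bin_gt0; lia.
rewrite logn_gt0 mem_primes pj hC /=.
have : j %| ((2*m).+1)`! by apply: dvdn_fact; rewrite h2 andbT prime_gt0.
have n1 : ~~ (j %| m`!) by apply: nd_fact; lia.
have n2 : ~~ (j %| (m.+1)`!) by apply: nd_fact; lia.
rewrite -hb; last lia.
rewrite Euclid_dvdM //; case/orP => //; rewrite Euclid_dvdM //.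
by rewrite (negbTE n1) (negbTE n2).
Qed.
Lemma prim_bound x : prim x <= 4^x.
Proof.
elim/ltn_ind: x => x IH.
have [m [Em|Em]] : exists m, x = 2*m \/ x = (2*m).+1 by exists (x %/ 2); lia.
  case: m Em => [|[|m]] Em; subst x.
  - by rewrite /prim unlock.
  - by rewrite /prim unlock.
  have np : prime (2 * m.+2) = false.
    apply/negP => /primeP[_ /(_ 2)]; rewrite dvdn_mulr //; lia.
  have E : 2 * m.+2 = (2*m).+3.+1 by lia.
  rewrite E primS -E np muln1.
  apply: leq_trans (IH _ _) _; first lia.
  by apply: leq_pexp2l; lia.
subst x; case: m IH => [|m] IH.
  by rewrite /prim unlock.
rewrite /prim (@big_cat_nat _ _ _ m.+3) //=; last lia.
have P1 : \prod_(0 <= i < m.+3 | prime i) i <= 4 ^ m.+2 by apply: (IH m.+2); lia.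
have P2 : \prod_(m.+3 <= i < (2 * m.+1).+2 | prime i) i <= 'C((2*m.+1).+1, m.+1).
  have hC : 0 < 'C((2*m.+1).+1, m.+1) by rewrite bin_gt0; lia.
  rewrite [X in _ <= X](@prod_logn _ (2 * m.+1).+2) //; last first.
    move=> p pp hp; case: (leqP p (2*m.+1).+1) => [|hle]; first lia.
    have := nd_fact pp hle.
    by rewrite (@bin_fact_dvd _ _ m.+1) //; lia.
  apply: (leq_trans _ (@prod_sub m.+3 _ _ _ _)); last by move=> p; apply: pfactor_gt0.
    2: lia.
  rewrite big_mkcond /=; apply: leq_prod_nat => i /andP[hi1 hi2].
  case: ifP => pi; last by apply: pfactor_gt0.
  have := @bin_odd_logn m.+1 i pi; rewrite hi1 /= => /(_ (hi2 : i < (2*m.+1).+2)) he.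
  by rewrite -{1}(expn1 i); apply: leq_pexp2l; [rewrite prime_gt0|].
apply: leq_trans (leq_mul P1 (leq_trans P2 (bin_odd_ub _))) _.
by rewrite -expnD; apply: leq_pexp2l; lia.
Qed.


Lemma sum_zero a b F : (forall i, a <= i < b -> F i = 0) -> \sum_(a <= i < b) F i = 0.
Proof.
move=> H; rewrite (eq_big_nat _ _ H).
by rewrite sum_nat_const_nat muln0.
Qed.

Lemma logn_bin_eq k p : prime p -> 0 < k ->
  logn p 'C(2*k,k) + 2 * \sum_(1 <= j < (2*k).+1) k %/ p^j
  = \sum_(1 <= j < (2*k).+1) (2*k) %/ p^j.
Proof.
move=> pp k0.
have hb := @bin_fact (2*k) k.
have E : 2 * k - k = k by lia.
rewrite E in hb.
have hC : 0 < 'C(2*k, k) by rewrite bin_gt0; lia.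
rewrite -logn_fact // -hb; last lia.
rewrite lognM ?muln_gt0 ?fact_gt0 // lognM ?fact_gt0 // logn_fact //.
rewrite (@big_cat_nat _ _ _ k.+1 1 (2*k).+1) /=; [|lia|lia].
rewrite (@sum_zero k.+1); last first.
  move=> i /andP[hi _]; apply: divn_small.
  have := ltn_expl i (prime_gt1 pp); lia.
lia.
Qed.

Lemma logn_bin_le k p : prime p -> 0 < k -> p ^ logn p 'C(2*k,k) <= 2*k.
Proof.
move=> pp k0.
have p1 := prime_gt1 pp.
set t := trunc_log p (2*k).
have ht : p ^ t <= 2*k by apply: trunc_logP; lia.
have ht2 : 2*k < p ^ t.+1 by apply: trunc_log_ltn.
have tt : t < (2*k).+1.
  have := ltn_expl t p1; lia.
have H := logn_bin_eq pp k0.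
have B : \sum_(1 <= j < (2*k).+1) (2*k) %/ p^j
   <= \sum_(1 <= j < (2*k).+1) ((j <= t) + 2 * (k %/ p^j)).
  apply: leq_sum_nat' => j _.
  have pj : 0 < p ^ j by rewrite expn_gt0; lia.
  case: (leqP j t) => hj /=.
    suff: (2*k) %/ p^j < 2 * (k %/ p^j) + 2 by lia.
    rewrite ltn_divLR //; have := ltn_ceil k pj; nia.
  rewrite divn_small //.
  apply: leq_trans ht2 _; apply: leq_pexp2l; lia.
rewrite big_split /= -big_distrr /= in B.
have Ht : \sum_(1 <= j < (2*k).+1) (j <= t : nat) = t.
  rewrite (@big_cat_nat _ _ _ t.+1 1 (2*k).+1) /=; [|lia|lia].
  rewrite (@sum_zero t.+1); last by move=> i /andP[hi _]; rewrite leqNgt hi.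
  rewrite (@eq_big_nat _ _ _ 1 t.+1 _ (fun _ => 1)); last by move=> i /andP[_]; rewrite ltnS => ->.
  rewrite sum_nat_const_nat; lia.
rewrite Ht in B.
have he : logn p 'C(2*k,k) <= t by lia.
apply: leq_trans ht; apply: leq_pexp2l => //; lia.
Qed.

Lemma logn_bin_zero k p : prime p -> 0 < k -> 2*k < p * p -> p <= k -> 2*k < 3*p ->
  logn p 'C(2*k,k) = 0.
Proof.
move=> pp k0 h1 h2 h3.
have p1 := prime_gt1 pp.
have H := logn_bin_eq pp k0.
have B : \sum_(1 <= j < (2*k).+1) (2*k) %/ p^j <= 2.
  rewrite big_ltn; last lia.
  rewrite sum_zero; last first.
    move=> j /andP[hj _]; apply: divn_small; apply: leq_trans h1 _.
    have -> : p * p = p ^ 2 by rewrite expnS expn1.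
    apply: leq_pexp2l; lia.
  rewrite expn1 addn0 -ltnS ltn_divLR; lia.
have A : 1 <= \sum_(1 <= j < (2*k).+1) k %/ p^j.
  rewrite big_ltn; last lia.
  rewrite expn1; have : 1 <= k %/ p by rewrite leq_divRL; lia.
  lia.
lia.
Qed.


Lemma pow6 x : 36 <= x -> x^6 <= 2^(x-3).
Proof.
elim: x => // x IH hx.
case: (ltnP x 36) => hx36.
  have -> : x = 35 by lia.
  rewrite (_ : 35.+1 - 3 = 33); [lia|by []].
have h : 8 * (x.+1)^3 <= 9 * x^3 by nia.
have h2 := leq_mul h h.
have E1 : 8 * (x.+1)^3 * (8 * (x.+1)^3) = 64 * x.+1^6.
  rewrite -[6]/(3+3) expnD; lia.
have E2 : 9 * x^3 * (9 * x^3) = 81 * x^6.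
  rewrite -[6]/(3+3) expnD; lia.
rewrite E1 E2 in h2.
have IH' := IH hx36.
have E3 : 2 ^ (x.+1 - 3) = 2 * 2 ^ (x - 3).
  rewrite -expnS; congr (2 ^ _); lia.
rewrite E3. lia.
Qed.

Lemma final k r : 631 <= k -> r*r <= 2*k -> 2*k < r.+1*r.+1 ->
  4^k <= (2*k).+1 * ((2*k)^r.+1 * 4^((2*k) %/ 3)) -> False.
Proof.
move=> hk h1 h2 H.
have x36 : 36 <= r.+1.
  case: (ltnP r.+1 36) => // hr.
  have : r.+1 * r.+1 <= 35 * 35 by apply: leq_mul; lia.
  lia.
set x := r.+1 in x36 h2 H.
set Q := 4^((2*k) %/ 3) in H.
have a : (2*k)^x <= (x*x)^x by rewrite leq_exp2r //; lia.
have b : 4^k <= (x*x)^x.+1 * Q.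
  apply: leq_trans H _; rewrite expnS -mulnA; apply: leq_mul; first lia.
  by apply: leq_mul.
have c : (4^k)^3 <= ((x*x)^x.+1)^3 * Q^3.
  by rewrite -expnMn leq_exp2r.
have d : Q^3 <= 4^(2*k).
  rewrite /Q -expnM; apply: leq_pexp2l => //.
  have := leq_divM (2*k) 3; lia.
have e : 4^k * 4^(2*k) <= ((x*x)^x.+1)^3 * 4^(2*k).
  apply: leq_trans (leq_mul (leqnn _) d).
  apply: leq_trans c.
  by rewrite -expnD -expnM; have -> : k + 2*k = k*3 by lia.
rewrite leq_pmul2r ?expn_gt0 // in e.
have f : ((x*x)^x.+1)^3 = (x^6)^x.+1.
  by rewrite -!expnM expnMn -expnD; congr (_ ^ _); lia.
rewrite f in e.
have g : (x^6)^x.+1 <= (2^(x-3))^x.+1 by rewrite leq_exp2r // pow6.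
have hh : 2^(r*r) <= 4^k.
  have -> : 4^k = 2^(2*k) by rewrite expnM.
  by apply: leq_pexp2l.
have := leq_trans hh (leq_trans e g).
rewrite -expnM leq_exp2l //.
move=> hl; move: hl x36; rewrite /x; clear; nia.
Qed.


Lemma prim_eq y N : y <= N ->
  \prod_(0 <= p < N.+1) (if prime p && (p <= y) then p else 1) = prim y.
Proof.
move=> hy; rewrite /prim.
rewrite (@big_cat_nat _ _ _ y.+1 0 N.+1) //=.
rewrite [X in _ * X = _](@eq_big_nat _ _ _ y.+1 N.+1 _ (fun _ => 1)); last first.
  by move=> i /andP[hi _]; rewrite leqNgt hi andbF.
rewrite prod_nat_const_nat exp1n muln1 [RHS]big_mkcond.
apply: eq_big_nat => i /andP[_ hi]; rewrite ltnS in hi; by rewrite hi andbT.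
Qed.

Lemma bertrand_large k : 631 <= k ->
  (forall q, prime q -> k < q -> q <= 2*k -> False) -> False.
Proof.
move=> hk Hq.
have k0 : 0 < k by lia.
have [r /andP[hr1 hr2]] := sqrt_ex (2*k).
set C := 'C(2*k, k).
have hC : 0 < C by rewrite bin_gt0; lia.
have hrep : C = \prod_(0 <= p < (2*k).+1) p ^ logn p C.
  apply: prod_logn => // p pp hp.
  have h1 := logn_bin_le pp k0.
  have h2 : 0 < logn p C by rewrite logn_gt0 mem_primes pp hC hp.
  have : p ^ 1 <= p ^ logn p C by apply: leq_pexp2l; [rewrite prime_gt0|].
  rewrite expn1 -/C in h1 *; lia.
have hr3 : r.+1 <= (2*k).+1 by nia.
rewrite (@big_cat_nat _ _ _ r.+1 0 (2*k).+1) //= in hrep.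
have P1 : \prod_(0 <= p < r.+1) p ^ logn p C <= (2*k)^r.+1.
  apply: leq_trans (_ : \prod_(0 <= p < r.+1) (2*k) <= _); last first.
    by rewrite prod_nat_const_nat subn0.
  apply: leq_prod_nat => p _.
  case: (boolP (prime p)) => pp; first exact: logn_bin_le.
  by rewrite logn_np // expn0; lia.
set g := fun p => if prime p && (p <= (2*k) %/ 3) then p else 1.
have P2 : \prod_(r.+1 <= p < (2*k).+1) p ^ logn p C <= prim ((2*k) %/ 3).
  rewrite -(@prim_eq _ (2*k)); last by apply: leq_div.
  apply: leq_trans (_ : \prod_(r.+1 <= p < (2*k).+1) g p <= _); last first.
    apply: prod_sub; first lia.
    by move=> p; rewrite /g; case: ifP => // /andP[/prime_gt0].
  apply: leq_prod_nat => p /andP[hp1 hp2].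
  rewrite /g; case: (boolP (prime p)) => pp /=; last by rewrite logn_np // expn0.
  set e := logn p C.
  have he1 : p ^ e <= 2 * k := logn_bin_le pp k0.
  have hpp : 2 * k < p * p by apply: (leq_trans hr2); apply: leq_mul.
  have he2 : e <= 1.
    case: (leqP e 1) => // he.
    have : p ^ 2 <= p ^ e by apply: leq_pexp2l; [rewrite prime_gt0|].
    rewrite expnS expn1; lia.
  case: (leqP p ((2*k) %/ 3)) => hy /=.
    rewrite -[X in _ <= X](expn1 p); apply: leq_pexp2l => //; exact: prime_gt0.
  have h3 : 2 * k < 3 * p.
    move: hy; rewrite ltn_divLR //; lia.
  case: (leqP p k) => hpk.
    by rewrite /e logn_bin_zero.
  exfalso; apply: (Hq p) => //; lia.
have L := central_lb k.
rewrite -/C hrep in L.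
apply: (@final k r) => //.
apply: leq_trans L _; apply: leq_mul => //.
apply: leq_mul => //; apply: leq_trans P2 (prim_bound _).
Qed.


Lemma bertrand k : 0 < k -> exists2 q, prime q & k < q <= 2*k.
Proof.
move=> k0.
case: (ltnP k 631) => hk.
  case: (ltnP k 2) => h; first by exists 2 => //; lia.
  case: (ltnP k 3) => h3; first by exists 3 => //; lia.
  case: (ltnP k 5) => h5; first by exists 5 => //; lia.
  case: (ltnP k 7) => h7; first by exists 7 => //; lia.
  case: (ltnP k 13) => h13; first by exists 13 => //; lia.
  case: (ltnP k 23) => h23; first by exists 23 => //; lia.
  case: (ltnP k 43) => h43; first by exists 43 => //; lia.
  case: (ltnP k 83) => h83; first by exists 83 => //; lia.
  case: (ltnP k 163) => h163; first by exists 163 => //; lia.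
  case: (ltnP k 317) => h317; first by exists 317 => //; lia.
  by exists 631 => //; lia.
case: (boolP (has (fun q => prime q && (k < q) && (q <= 2*k)) (iota 0 (2*k).+1))).
  by move=> /hasP[q _ /andP[/andP[pq h1] h2]]; exists q => //; rewrite h1.
move=> /hasPn H; exfalso; apply: (bertrand_large hk) => q pq h1 h2.
have : q \in iota 0 (2*k).+1 by rewrite mem_iota; lia.
by move=> /H; rewrite pq h1 h2.
Qed.

Lemma bigmin_le (s : seq nat) x F d : d \in s -> \big[minn/x]_(i <- s) F i <= F d.
Proof.
elim: s => // a s IH; rewrite inE big_cons => /orP[/eqP->|hd].
  exact: geq_minl.
by apply: leq_trans (geq_minr _ _) (IH hd).
Qed.

Lemma delta_le n d : 0 < n -> d %| n -> delta n <= d + n %/ d.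
Proof. by move=> n0 hd; apply: bigmin_le; rewrite -dvdn_divisors. Qed.

Lemma delta_ge n c : c <= n.+1 -> (forall d, d \in divisors n -> c <= d + n %/ d) ->
  c <= delta n.
Proof.
move=> h1 h2; rewrite /delta big_seq.
apply: (big_ind (fun v => c <= v)) => //.
  by move=> a b ha hb; rewrite leq_min ha hb.
Qed.

Lemma delta_prime p : prime p -> delta p = p.+1.
Proof.
move=> pp; have p0 := prime_gt0 pp; apply/eqP; rewrite eqn_leq; apply/andP; split.
  by have := @delta_le p 1 p0 (dvd1n p); rewrite divn1 add1n.
apply: delta_ge => // d; rewrite -dvdn_divisors // => hd.
case/primeP: pp => _ /(_ d hd) /orP[/eqP->|/eqP->].
  by rewrite divn1 add1n.
by rewrite divnn p0 addn1.
Qed.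

Lemma delta_ub m : 0 < m -> delta m <= m.+1.
Proof. by move=> m0; have := @delta_le m 1 m0 (dvd1n m); rewrite divn1 add1n. Qed.

Theorem proposition5p1 (n : nat) (hn : 0 < n) :
  (forall m : nat, 0 < m -> m < n -> delta m < delta n) <-> (n = 1 \/ prime n).
Proof.
split; last first.
  case=> [->|pn] m m0 hm; first lia.
  by rewrite (delta_prime pn); have := delta_ub m0; lia.
move=> H.
case: (boolP (prime n)) => pn; first by right.
case/primePn: (pn) => [hn2|[d /andP[hd1 hd2] hdn]]; first by left; lia.
exfalso.
set q := n %/ d.
have Enq : n = q * d by rewrite divnK.
have hq : 2 <= q.
  case: (ltnP q 2) => // hq; rewrite Enq in hd2; nia.
set k := n %/ 2.
have hk1 : 2 * k <= n by rewrite mulnC leq_divM.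
have hk2 : n < 2 * k + 2.
  have := ltn_ceil n (isT : 0 < 2); rewrite -/k; lia.
have [Q pQ /andP[hQ1 hQ2]] := @bertrand k (ltac:(nia)).
have hQn : Q != n by apply/negP => /eqP E; move: pn; rewrite -E pQ.
have hQ : Q < n by rewrite ltn_neqAle hQn /=; lia.
have := H Q (prime_gt0 pQ) hQ.
rewrite delta_prime // ltnNge => /negP; apply.
apply: leq_trans (delta_le hn hdn) _.
rewrite -/q.
case: (ltnP d 3) => hd3; case: (ltnP q 3) => hq3; nia.
Qed.
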